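(* Let $M$ be a finite set of item types and let $\mathcal{D}=(p_j)_{j\in M}$ be a probability distribution on $M$. There are $n$ agents with valuations $w_i:\mathbb{Z}_+^{M}\to\mathbb{R}_+$ (functions of multisets of items) that are monotone and have the property of diminishing returns. Suppose $m$ items arrive, each drawn independently from $\mathcal{D}$, and let $OPT=\mathbb{E}[OPT(\mathcal{M})]$, where $OPT(\mathcal{M})$ is the maximum of $\sum_i w_i(S_i)$ over partitions of the realized arrival multiset $\mathcal{M}$ into multisets $S_1,\dots,S_n$. Consider the greedy algorithm: if the multisets assigned so far are $(T_1,\dots,T_n)$ when item $j$ arrives, it assigns $j$ to an agent $i$ maximizing $w_i(T_i+j)-w_i(T_i)$. Then the expected welfare of the greedy algorithm is at least $(1-1/e)\,OPT$.
   Context: Multisets over $M$ are identified with vectors in $\mathbb{Z}_+^M$. $T+j$ denotes the multiset $T$ with one extra copy of $j$, and $T+S$ denotes the sum of multiplicities. A function $f:\mathbb{Z}_+^M\to\mathbb{R}$ has the property of diminishing returns if for all $x\le y$ (coordinatewise) and every unit vector $e_j$ one has $f(x+e_j)-f(x)\ge f(y+e_j)-f(y)$. It is monotone if $f(x)\le f(y)$ whenever $x\le y$. *)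

(* Defs.v *)
From Stdlib Require Import Reals List.
Import ListNotations.
Open Scope R_scope.

(* Multisets over M are functions M -> nat (vectors in Z_+^M).
   Agents are indexed by 0..n-1; a profile of bundles is nat -> (M -> nat). *)

Section Defs.
Context {M : Type} (eqd : forall x y : M, {x = y} + {x <> y}).

Fixpoint rsum (n : nat) (f : nat -> R) : R :=
  match n with O => 0 | S k => rsum k f + f k end.

Definition madd (x : M -> nat) (j : M) : M -> nat :=
  fun j' => if eqd j' j then S (x j') else x j'.

Definition mle (x y : M -> nat) : Prop := forall j, (x j <= y j)%nat.

Definition monotone (f : (M -> nat) -> R) : Prop :=
  forall x y, mle x y -> f x <= f y.

Definition diminishing_returns (f : (M -> nat) -> R) : Prop :=
  forall x y j, mle x y -> f (madd x j) - f x >= f (madd y j) - f y.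

Fixpoint seqs {A : Type} (l : list A) (m : nat) : list (list A) :=
  match m with
  | O => [[]]
  | S k => flat_map (fun a => map (cons a) (seqs l k)) l
  end.

Definition seq_prob (p : M -> R) (s : list M) : R :=
  fold_right (fun j acc => p j * acc) 1 s.

(** expectation over m i.i.d. draws from p (support enumerated by enum) *)
Definition expect (enum : list M) (p : M -> R) (m : nat) (f : list M -> R) : R :=
  fold_right (fun s acc => seq_prob p s * f s + acc) 0 (seqs enum m).

Definition welfare (n : nat) (w : nat -> (M -> nat) -> R) (T : nat -> M -> nat) : R :=
  rsum n (fun i => w i (T i)).

(** bundles induced by assigning the k-th arriving item s_k to agent a_k *)
Fixpoint bundles (s : list M) (a : list nat) : nat -> M -> nat :=
  match s, a with
  | j :: s', i :: a' =>
      fun i' j' => if Nat.eqb i' i then madd (bundles s' a' i') j j' else bundles s' a' i' j'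
  | _, _ => fun _ _ => O
  end.

(** OPT(s): max over all partitions of the arrival multiset into n bundles,
    i.e. over all assignments of the arrivals to agents 0..n-1. *)
Definition opt (n : nat) (w : nat -> (M -> nat) -> R) (s : list M) : R :=
  fold_right (fun a acc => Rmax (welfare n w (bundles s a)) acc) 0
    (seqs (seq 0 n) (length s)).

Definition empty_profile : nat -> M -> nat := fun _ _ => O.

Definition add_to (T : nat -> M -> nat) (i : nat) (j : M) : nat -> M -> nat :=
  fun i' => if Nat.eqb i' i then madd (T i') j else T i'.

(** greedy run: sel t T j is the agent chosen at time t, current bundles T, item j *)
Fixpoint greedy_run (sel : nat -> (nat -> M -> nat) -> M -> nat)
    (t : nat) (T : nat -> M -> nat) (s : list M) : nat -> M -> nat :=
  match s with
  | [] => T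
  | j :: s' => greedy_run sel (S t) (add_to T (sel t T j) j) s'
  end.

Definition greedy_rule (n : nat) (w : nat -> (M -> nat) -> R)
    (sel : nat -> (nat -> M -> nat) -> M -> nat) : Prop :=
  forall t T j, (sel t T j < n)%nat /\
    forall i, (i < n)%nat ->
      w i (madd (T i) j) - w i (T i) <= w (sel t T j) (madd (T (sel t T j)) j) - w (sel t T j) (T (sel t T j)).

End Defs.

(* Main.v *)
Require Import Defs.
From Stdlib Require Import Reals List Lia Lra FunctionalExtensionality.
Import ListNotations.
Open Scope R_scope.

Definition sumL {A : Type} (l : list A) (f : A -> R) : R :=
  fold_right (fun x acc => f x + acc) 0 l.

Lemma sumL_app {A} (l1 l2 : list A) f : sumL (l1 ++ l2) f = sumL l1 f + sumL l2 f.
Proof. induction l1; simpl; [lra|]. unfold sumL in *; simpl. rewrite IHl1; lra. Qed.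

Lemma sumL_map {A B} (g : A -> B) l f : sumL (map g l) f = sumL l (fun x => f (g x)).
Proof. induction l; simpl; auto. unfold sumL in *; simpl; rewrite IHl; auto. Qed.

Lemma sumL_flat_map {A B} (g : A -> list B) l f :
  sumL (flat_map g l) f = sumL l (fun x => sumL (g x) f).
Proof. induction l; simpl; auto. rewrite sumL_app, IHl. reflexivity. Qed.

Lemma sumL_plus {A} (l : list A) f g : sumL l (fun x => f x + g x) = sumL l f + sumL l g.
Proof. induction l; unfold sumL in *; simpl; [lra|]. rewrite IHl; lra. Qed.

Lemma sumL_scal {A} (l : list A) c f : sumL l (fun x => c * f x) = c * sumL l f.
Proof. induction l; unfold sumL in *; simpl; [lra|]. rewrite IHl; lra. Qed.

Lemma sumL_le {A} (l : list A) f g : (forall x, f x <= g x) -> sumL l f <= sumL l g.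
Proof. intros H; induction l; unfold sumL in *; simpl; [lra|]. specialize (H a); lra. Qed.

Lemma sumL_ext {A} (l : list A) f g : (forall x, f x = g x) -> sumL l f = sumL l g.
Proof. intros H; induction l; unfold sumL in *; simpl; auto. rewrite H, IHl; auto. Qed.

Lemma sumL_nonneg {A} (l : list A) f : (forall x, 0 <= f x) -> 0 <= sumL l f.
Proof. intros H; induction l; unfold sumL in *; simpl; [lra|]. specialize (H a); lra. Qed.


Lemma rsum_ext n f g : (forall k, (k < n)%nat -> f k = g k) -> rsum n f = rsum n g.
Proof. induction n; intros H; simpl; auto. rewrite IHn by (intros; apply H; lia). rewrite (H n) by lia; auto. Qed.

Lemma rsum_le n f g : (forall k, (k < n)%nat -> f k <= g k) -> rsum n f <= rsum n g.
Proof. induction n; intros H; simpl; [lra|]. pose proof (H n ltac:(lia)). pose proof (IHn ltac:(intros; apply H; lia)). lra. Qed.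

Lemma rsum_nonneg n f : (forall k, (k < n)%nat -> 0 <= f k) -> 0 <= rsum n f.
Proof. induction n; intros H; simpl; [lra|]. pose proof (H n ltac:(lia)). pose proof (IHn ltac:(intros; apply H; lia)). lra. Qed.

Lemma rsum_update n f g i : (i < n)%nat -> (forall k, k <> i -> f k = g k) ->
  rsum n f = rsum n g + (f i - g i).
Proof.
  induction n; intros Hi H; [lia|]. simpl.
  destruct (Nat.eq_dec i n).
  - subst. rewrite (rsum_ext n f g) by (intros; apply H; lia). lra.
  - rewrite IHn by (auto; lia). rewrite (H n) by auto. lra.
Qed.

Section S.
Context {M : Type} (eqd : forall x y : M, {x = y} + {x <> y})
  (enum : list M) (p : M -> R) (Hp_nonneg : forall j, 0 <= p j)
  (Hp_sum : fold_right (fun j acc => p j + acc) 0 enum = 1).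

Lemma Hp_sumL : sumL enum p = 1.
Proof. exact Hp_sum. Qed.

Lemma seq_prob_nonneg s : 0 <= seq_prob p s.
Proof. induction s; simpl; [lra|]. apply Rmult_le_pos; auto. Qed.

Lemma expect_sumL k f : expect enum p k f = sumL (seqs enum k) (fun s => seq_prob p s * f s).
Proof. reflexivity. Qed.

Lemma expect_S k f : expect enum p (S k) f =
  sumL enum (fun a => p a * expect enum p k (fun s => f (a :: s))).
Proof.
  rewrite expect_sumL. simpl seqs. rewrite sumL_flat_map. apply sumL_ext; intros a.
  rewrite sumL_map, expect_sumL, <- sumL_scal. apply sumL_ext; intros s. simpl. lra.
Qed.

Lemma expect_0 f : expect enum p 0 f = f [].
Proof. unfold expect; simpl. lra. Qed.

Lemma expect_plus k f g : expect enum p k (fun s => f s + g s) = expect enum p k f + expect enum p k g.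
Proof. rewrite !expect_sumL, <- sumL_plus. apply sumL_ext; intros; lra. Qed.

Lemma expect_scal k c f : expect enum p k (fun s => c * f s) = c * expect enum p k f.
Proof. rewrite !expect_sumL, <- sumL_scal. apply sumL_ext; intros; lra. Qed.

Lemma expect_le k f g : (forall s, f s <= g s) -> expect enum p k f <= expect enum p k g.
Proof. intros H. rewrite !expect_sumL. apply sumL_le; intros s.
  apply Rmult_le_compat_l; auto using seq_prob_nonneg. Qed.

Lemma expect_const k c : expect enum p k (fun _ => c) = c.
Proof.
  induction k. - apply expect_0.
  - rewrite expect_S. rewrite (sumL_ext _ _ (fun a => c * p a)) by (intros; rewrite IHk; lra).
    rewrite sumL_scal, Hp_sumL. lra.
Qed.

Lemma expect_list k h : expect enum p k (fun s => sumL s h) = INR k * sumL enum (fun j => p j * h j).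
Proof.
  induction k. - rewrite expect_0. simpl. lra.
  - rewrite expect_S.
    rewrite (sumL_ext _ _ (fun a => p a * h a + INR k * sumL enum (fun j => p j * h j) * p a)).
    + rewrite sumL_plus, sumL_scal, Hp_sumL, S_INR. lra.
    + intros a. simpl. rewrite (expect_plus k (fun _ => h a) (fun s => sumL s h)), expect_const, IHk. lra.
Qed.

Context (n : nat) (w : nat -> (M -> nat) -> R)
  (Hw_nonneg : forall i x, (i < n)%nat -> 0 <= w i x)
  (Hw_mono : forall i, (i < n)%nat -> monotone (w i))
  (Hw_dr : forall i, (i < n)%nat -> diminishing_returns eqd (w i))
  (sel : nat -> (nat -> M -> nat) -> M -> nat)
  (Hsel : greedy_rule eqd n w sel).

Definition gain t T j := w (sel t T j) (madd eqd (T (sel t T j)) j) - w (sel t T j) (T (sel t T j)).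

Lemma mle_madd x j : mle x (madd eqd x j).
Proof. intros j'. unfold madd. destruct (eqd j' j); lia. Qed.

Lemma gain_nonneg t T j : 0 <= gain t T j.
Proof. unfold gain. destruct (Hsel t T j) as [Hl _].
  pose proof (Hw_mono _ Hl _ _ (mle_madd (T (sel t T j)) j)). lra. Qed.

Lemma gain_ge t T j i : (i < n)%nat -> w i (madd eqd (T i) j) - w i (T i) <= gain t T j.
Proof. intros Hi. destruct (Hsel t T j) as [_ H]. apply H; auto. Qed.

Lemma welfare_add_to T i j : (i < n)%nat ->
  welfare n w (add_to eqd T i j) = welfare n w T + (w i (madd eqd (T i) j) - w i (T i)).
Proof.
  intros Hi. unfold welfare. rewrite (rsum_update n _ (fun i0 => w i0 (T i0)) i Hi).
  - unfold add_to. rewrite Nat.eqb_refl. reflexivity.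
  - intros k Hk. unfold add_to. apply Nat.eqb_neq in Hk. rewrite Hk. reflexivity.
Qed.

Lemma welfare_nonneg T : 0 <= welfare n w T.
Proof. apply rsum_nonneg; intros; auto. Qed.

Lemma sumL_gain_nonneg t T s : 0 <= sumL s (gain t T).
Proof. apply sumL_nonneg, gain_nonneg. Qed.

Definition plusP (T U : nat -> M -> nat) : nat -> M -> nat := fun i j => (T i j + U i j)%nat.

Lemma bundles_nil a : bundles eqd [] a = fun _ _ => O.
Proof. reflexivity. Qed.

Lemma bundles_nil2 s : bundles eqd s [] = fun _ _ => O.
Proof. destruct s; reflexivity. Qed.

Lemma plusP_0 T : plusP T (fun _ _ => O) = T.
Proof. unfold plusP. extensionality i; extensionality j; lia. Qed.

Lemma plusP_cons T j s i a :
  plusP T (bundles eqd (j :: s) (i :: a)) = add_to eqd (plusP T (bundles eqd s a)) i j.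
Proof.
  extensionality i'; extensionality j'. unfold plusP, add_to; simpl.
  destruct (Nat.eqb i' i); auto. unfold madd. destruct (eqd j' j); lia.
Qed.

Lemma welfare_plus_bound t T : forall s a, Forall (fun i => (i < n)%nat) a ->
  welfare n w (plusP T (bundles eqd s a)) <= welfare n w T + sumL s (gain t T).
Proof.
  induction s as [|j s IH]; intros a Ha.
  - rewrite bundles_nil, plusP_0. simpl. lra.
  - destruct a as [|i a].
    + rewrite bundles_nil2, plusP_0. pose proof (sumL_gain_nonneg t T (j::s)). lra.
    + inversion Ha; subst. rewrite plusP_cons, welfare_add_to by auto.
      pose proof (IH a H2).
      assert (Hm : mle (T i) (plusP T (bundles eqd s a) i)) by (intros j'; unfold plusP; lia).
      pose proof (Hw_dr i H1 _ _ j Hm).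
      pose proof (gain_ge t T j i H1).
      change (sumL (j :: s) (gain t T)) with (gain t T j + sumL s (gain t T)). lra.
Qed.

Lemma welfare_bundles_bound t T s a : Forall (fun i => (i < n)%nat) a ->
  welfare n w (bundles eqd s a) <= welfare n w T + sumL s (gain t T).
Proof.
  intros Ha. eapply Rle_trans; [|apply (welfare_plus_bound t T s a Ha)].
  apply rsum_le; intros k Hk. apply Hw_mono; auto. intros j'. unfold plusP; lia.
Qed.

Lemma seqs_in {A} (l : list A) k a : In a (seqs l k) -> Forall (fun x => In x l) a.
Proof.
  revert a; induction k; simpl; intros a H.
  - destruct H as [<-|[]]; constructor.
  - apply in_flat_map in H as [x [Hx Hy]]. apply in_map_iff in Hy as [y [<- Hy]].
    constructor; auto.
Qed.

Lemma fold_Rmax_le {A} (F : A -> R) L B : 0 <= B -> (forall a, In a L -> F a <= B) ->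
  fold_right (fun a acc => Rmax (F a) acc) 0 L <= B.
Proof.
  induction L; simpl; intros H0 H; auto. apply Rmax_lub; auto.
Qed.

Lemma fold_Rmax_ge0 {A} (F : A -> R) L : 0 <= fold_right (fun a acc => Rmax (F a) acc) 0 L.
Proof. induction L; simpl; [lra|]. eapply Rle_trans; [exact IHL | apply Rmax_r]. Qed.

Lemma opt_bound t T s : opt eqd n w s <= welfare n w T + sumL s (gain t T).
Proof.
  unfold opt. apply fold_Rmax_le.
  - pose proof (welfare_nonneg T); pose proof (sumL_gain_nonneg t T s); lra.
  - intros a Ha. apply welfare_bundles_bound. apply seqs_in in Ha.
    eapply Forall_impl; [|exact Ha]. intros x Hx. apply in_seq in Hx. lia.
Qed.

Lemma opt_nonneg s : 0 <= opt eqd n w s.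
Proof. apply fold_Rmax_ge0. Qed.

Lemma key_claim m t T :
  expect enum p m (opt eqd n w) - welfare n w T <= INR m * sumL enum (fun j => p j * gain t T j).
Proof.
  rewrite <- expect_list, <- (expect_const m (welfare n w T)).
  assert (H := expect_le m (opt eqd n w) (fun s => welfare n w T + sumL s (gain t T)) (opt_bound t T)).
  rewrite expect_plus in H. lra.
Qed.

Lemma main_ind m (Hm : (1 <= m)%nat) : forall k t T,
  expect enum p m (opt eqd n w) - expect enum p k (fun s => welfare n w (greedy_run eqd sel t T s))
  <= (1 - / INR m) ^ k * (expect enum p m (opt eqd n w) - welfare n w T).
Proof.
  set (O := expect enum p m (opt eqd n w)).
  assert (HmR : 1 <= INR m) by (apply (le_INR 1); auto).
  assert (Hc0 : 0 <= 1 - / INR m).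
  { assert (/ INR m <= 1) by (rewrite <- Rinv_1; apply Rinv_le_contravar; lra). lra. }
  induction k; intros t T.
  - rewrite expect_0. simpl. lra.
  - rewrite expect_S. simpl greedy_run.
    set (E1 := sumL enum (fun j => p j * gain t T j)).
    assert (H1 : O - sumL enum (fun a => p a * expect enum p k
        (fun s => welfare n w (greedy_run eqd sel (S t) (add_to eqd T (sel t T a) a) s)))
      <= sumL enum (fun a => p a * ((1 - / INR m) ^ k * (O - welfare n w T - gain t T a)))).
    { replace O with (sumL enum (fun a => p a * O)) at 1 by (rewrite (sumL_ext _ _ (fun a => O * p a)) by (intros; lra); rewrite sumL_scal, Hp_sumL; lra).
      assert (Hx : forall a, p a * O - p a * expect enum p k
        (fun s => welfare n w (greedy_run eqd sel (S t) (add_to eqd T (sel t T a) a) s)) <=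
        p a * ((1 - / INR m) ^ k * (O - welfare n w T - gain t T a)) ).
      { intros a. pose proof (IHk (S t) (add_to eqd T (sel t T a) a)) as Hk.
        rewrite welfare_add_to in Hk by (apply Hsel). fold O in Hk. unfold gain.
        pose proof (Hp_nonneg a).
        rewrite <- Rmult_minus_distr_l. apply Rmult_le_compat_l; auto.
        set (cc := (1 - / INR m) ^ k) in *. lra. }
      assert (Hs := sumL_le enum _ _ Hx).
      set (F := fun a => expect enum p k
        (fun s => welfare n w (greedy_run eqd sel (S t) (add_to eqd T (sel t T a) a) s))) in *.
      rewrite (sumL_ext _ (fun x => p x * O - p x * F x) (fun x => p x * O + (-1) * (p x * F x))) in Hs by (intros; lra).
      rewrite sumL_plus, sumL_scal in Hs. unfold F in Hs; cbv beta in Hs. lra. }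
    rewrite (sumL_ext _ (fun a => p a * ((1 - / INR m) ^ k * (O - welfare n w T - gain t T a))) (fun a => ((1 - / INR m) ^ k * (O - welfare n w T)) * p a
       + (- (1 - / INR m) ^ k) * (p a * gain t T a))) in H1 by (intros; ring).
    rewrite sumL_plus, !sumL_scal, Hp_sumL in H1. fold E1 in H1.
    pose proof (key_claim m t T) as HK. fold O E1 in HK.
    assert (HE : O - welfare n w T - E1 <= (1 - / INR m) * (O - welfare n w T)).
    { assert (E1 >= / INR m * (O - welfare n w T)).
      { apply Rle_ge. rewrite <- (Rmult_1_l E1), <- (Rinv_l (INR m)) by lra.
        rewrite Rmult_assoc. apply Rmult_le_compat_l; [left; apply Rinv_0_lt_compat; lra| lra]. }
      lra. }
    pose proof (pow_le _ k Hc0).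
    assert (HH := Rmult_le_compat_l _ _ _ H HE).
    simpl pow. lra.
Qed.

End S.

Lemma exp_pow_l x k : exp x ^ k = exp (INR k * x).
Proof. induction k. - simpl. rewrite Rmult_0_l, exp_0. reflexivity.
  - rewrite S_INR. simpl pow. rewrite IHk, <- exp_plus. f_equal. ring. Qed.

Lemma pow_bound m : (1 <= m)%nat -> (1 - / INR m) ^ m <= / exp 1.
Proof.
  intros Hm. assert (HmR : 1 <= INR m) by (apply (le_INR 1); auto).
  assert (Hc0 : 0 <= 1 - / INR m).
  { assert (/ INR m <= 1) by (rewrite <- Rinv_1; apply Rinv_le_contravar; lra). lra. }
  eapply Rle_trans. { apply pow_incr. split; [exact Hc0|]. apply (exp_ineq1_le (- / INR m)). }
  rewrite exp_pow_l, <- exp_Ropp. right. f_equal. field. lra.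
Qed.

Theorem theorem4p3
  (M : Type) (eqd : forall x y : M, {x = y} + {x <> y})
  (enum : list M) (Henum_nodup : NoDup enum) (Henum_full : forall x : M, In x enum)
  (p : M -> R) (Hp_nonneg : forall j, 0 <= p j)
  (Hp_sum : fold_right (fun j acc => p j + acc) 0 enum = 1)
  (n : nat) (Hn : (0 < n)%nat)
  (w : nat -> (M -> nat) -> R)
  (Hw_nonneg : forall i x, (i < n)%nat -> 0 <= w i x)
  (Hw_mono : forall i, (i < n)%nat -> monotone (w i))
  (Hw_dr : forall i, (i < n)%nat -> diminishing_returns eqd (w i))
  (m : nat)
  (sel : nat -> (nat -> M -> nat) -> M -> nat)
  (Hsel : greedy_rule eqd n w sel) :
  expect enum p m (fun s => welfare n w (greedy_run eqd sel 0 empty_profile s))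
  >= (1 - / exp 1) * expect enum p m (fun s => opt eqd n w s).
Proof.
  assert (He : 0 < / exp 1 <= 1).
  { pose proof (exp_ineq1_le 1). split. apply Rinv_0_lt_compat, exp_pos.
    replace 1 with (/ 1) at 2 by apply Rinv_1. apply Rinv_le_contravar; lra. }
  pose proof (welfare_nonneg n w Hw_nonneg empty_profile) as HW0.
  assert (HO : 0 <= expect enum p m (fun s => opt eqd n w s)).
  { rewrite <- (expect_const enum p Hp_sum m 0). apply expect_le; auto. intros; apply opt_nonneg. }
  destruct m as [|m'].
  - rewrite !expect_0 in *. simpl greedy_run.
    assert (opt eqd n w [] <= welfare n w empty_profile).
    { unfold opt. simpl. apply Rmax_lub; [right; reflexivity|exact HW0]. }
    nra.
  - pose proof (main_ind eqd enum p Hp_nonneg Hp_sum n w Hw_nonneg Hw_mono Hw_dr sel Hsel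
      (S m') ltac:(lia) (S m') 0 empty_profile) as H.
    pose proof (pow_bound (S m') ltac:(lia)).
    assert (0 <= (1 - / INR (S m')) ^ S m').
    { apply pow_le. assert (HmR : 1 <= INR (S m')) by (apply (le_INR 1); lia).
      assert (/ INR (S m') <= 1) by (rewrite <- Rinv_1; apply Rinv_le_contravar; lra). lra. }
    set (O := expect enum p (S m') (opt eqd n w)) in *.
    change (expect enum p (S m') (fun s => opt eqd n w s)) with O.
    set (c := (1 - / INR (S m')) ^ S m') in *.
    assert (c * (O - welfare n w empty_profile) <= / exp 1 * O) by nra.
    lra.
Qed.
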